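(* If $Q$ is a Jordan loop and $x\in Q$, then $(x^{2^n})^{-1}=(x^{-1})^{2^n}$ for every integer $n\ge 0$.
   Context: A loop is a set $Q$ with a binary operation (juxtaposition) and neutral element $e$ such that for all $a,b$ the equations $ax=b$, $ya=b$ have unique solutions. A Jordan loop is a commutative loop satisfying $x^2(yx)=(x^2y)x$. For $y\in Q$ and $k\ge 0$, $y^k$ denotes the right-associated product $y(y(\cdots(ye)\cdots))$ with $k$ factors $y$. Since the loop is commutative, each $x$ has a unique inverse $x^{-1}$ with $xx^{-1}=x^{-1}x=e$. *)

(* Defs.v *)
From Stdlib Require Import ClassicalEpsilon.

Record loop := Loop {
  carrier :> Type;
  lop : carrier -> carrier -> carrier;
  le : carrier;
  lop_e_l : forall x, lop le x = x;
  lop_e_r : forall x, lop x le = x;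
  ldiv_unique : forall a b : carrier, exists! x, lop a x = b;
  rdiv_unique : forall a b : carrier, exists! y, lop y a = b
}.

Definition jordan_loop (Q : loop) : Prop :=
  (forall x y : Q, lop Q x y = lop Q y x) /\
  (forall x y : Q,
     lop Q (lop Q x x) (lop Q y x) = lop Q (lop Q (lop Q x x) y) x).

Fixpoint lpow (Q : loop) (k : nat) (y : Q) : Q :=
  match k with
  | O => le Q
  | S k' => lop Q y (lpow Q k' y)
  end.

Lemma ex_of_uniq {A} (P : A -> Prop) : (exists! x, P x) -> exists x, P x.
Proof. intros [x [H _]]; exists x; exact H. Qed.

(* x^{-1}: the unique solution of x z = e (two-sided in a commutative loop). *)
Definition linv (Q : loop) (x : Q) : Q :=
  proj1_sig (constructive_indefinite_description _
    (ex_of_uniq _ (ldiv_unique Q x (le Q)))).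

Lemma linv_spec (Q : loop) (x : Q) : lop Q x (linv Q x) = le Q.
Proof. unfold linv. destruct constructive_indefinite_description; auto. Qed.

(* Main.v *)
Require Import Defs.
From Stdlib Require Import Lia PeanoNat.

Section S.
Variable Q : loop.
Hypothesis HJ : jordan_loop Q.
Notation "a * b" := (lop Q a b).

Lemma comm : forall a b : Q, a * b = b * a.
Proof. destruct HJ as [H _]; exact H. Qed.

Lemma rcanc : forall a y1 y2 : Q, y1 * a = y2 * a -> y1 = y2.
Proof.
  intros a y1 y2 H. destruct (rdiv_unique Q a (y1 * a)) as [y [_ U]].
  rewrite <- (U y1 eq_refl). apply U. symmetry; exact H.
Qed.

Lemma inv_uniq : forall a z : Q, a * z = le Q -> z = linv Q a.
Proof.
  intros a z H. destruct (ldiv_unique Q a (le Q)) as [y [_ U]].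
  rewrite <- (U z H). apply U. apply linv_spec.
Qed.

Lemma jor : forall a y : Q, (a * a) * (y * a) = ((a * a) * y) * a.
Proof. destruct HJ as [_ H]; exact H. Qed.

Lemma step1 : forall a b : Q, a * b = le Q -> (a * a) * b = a.
Proof.
  intros a b H. apply (rcanc a). rewrite <- jor.
  rewrite (comm b a), H, lop_e_r. reflexivity.
Qed.

Lemma sq_inv : forall a : Q, linv Q (a * a) = linv Q a * linv Q a.
Proof.
  intros a. set (u := linv Q a).
  assert (Hu : a * u = le Q) by apply linv_spec.
  assert (Hu' : u * a = le Q) by (rewrite comm; exact Hu).
  symmetry. apply inv_uniq. rewrite comm.
  apply (rcanc u). rewrite lop_e_l. rewrite <- jor.
  rewrite (step1 a u Hu). apply step1. exact Hu'.
Qed.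

Lemma L2comm : forall a y : Q, (a * a) * (a * y) = a * ((a * a) * y).
Proof. intros a y. rewrite (comm a y), jor. apply comm. Qed.

Lemma powA : forall (a : Q) j, (a * a) * lpow Q j a = lpow Q (S (S j)) a.
Proof.
  intros a j; induction j as [|j IH].
  - simpl. rewrite !lop_e_r. reflexivity.
  - change (lpow Q (S j) a) with (a * lpow Q j a).
    rewrite L2comm, IH. reflexivity.
Qed.

Lemma powB : forall (a : Q) j, lpow Q j (a * a) = lpow Q (Nat.mul 2 j) a.
Proof.
  intros a j; induction j as [|j IH].
  - reflexivity.
  - replace (Nat.mul 2 (S j)) with (S (S (Nat.mul 2 j))) by lia.
    simpl lpow at 1. rewrite IH, powA. reflexivity.
Qed.
End S.

Theorem lemma2p6 (Q : loop) (HJ : jordan_loop Q) (x : Q) (n : nat) :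
  linv Q (lpow Q (Nat.pow 2 n) x) = lpow Q (Nat.pow 2 n) (linv Q x).
Proof.
  revert x; induction n as [|n IH]; intros x.
  - simpl. rewrite !lop_e_r. reflexivity.
  - rewrite Nat.pow_succ_r'. rewrite <- !(powB Q HJ).
    rewrite IH, (sq_inv Q HJ). reflexivity.
Qed.
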